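(* Fix $n\ge1$ and an integer $q$ with $1\le q\le n$. Let $S=S_{u,b}$ where $(u,b)$ is drawn uniformly from $(\{0,1\}^n\setminus\{0^n\})\times\{0,1\}$. Any classical (possibly randomized) algorithm that is given $q$ samples drawn uniformly from $S$ and outputs some $y\in\{0,1\}^n$ satisfies \[ \Pr[y\in\bar S]\le \frac12+\frac{1}{2\left(2^{\,n-q+1}-1\right)}, \] where the probability is over the choice of $S$, the samples and the internal randomness of the algorithm. In particular, for every such algorithm there is some $S\in\mathcal{F}_{\mathrm{BV}}$ on which its success probability is at most this bound.
   Context: For $u\in\{0,1\}^n\setminus\{0^n\}$ and $b\in\{0,1\}$, $S_{u,b}=\{x\in\{0,1\}^n : u\cdot x\equiv b\pmod 2\}$, $\mathcal{F}_{\mathrm{BV}}$ is the family of all such sets, and $\bar S=\{0,1\}^n\setminus S$. Success means outputting an element of the complement $\bar S$. *)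

(* Defs.v *)
From HB Require Import structures.
From mathcomp Require Import all_boot all_order all_algebra.
Set Implicit Arguments. Unset Strict Implicit. Unset Printing Implicit Defensive.
Import Order.TTheory GRing.Theory Num.Theory.

Definition bvec (n : nat) := {ffun 'I_n -> bool}.

Definition zero_bvec (n : nat) : bvec n := [ffun => false].

Definition dotp (n : nat) (u x : bvec n) : bool :=
  \big[addb/false]_(i < n) (u i && x i).

Definition BVset (n : nat) (u : bvec n) (b : bool) : {set bvec n} :=
  [set x | dotp u x == b].

Definition samples (n q : nat) := {ffun 'I_q -> bvec n}.

Local Open Scope ring_scope.

(* A randomized algorithm: for each q-tuple of samples, a probability
   distribution over outputs y in {0,1}^n. *)
Definition is_rand_alg (R : realFieldType) (n q : nat)
    (A : samples n q -> bvec n -> R) : Prop :=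
  forall s, (forall y, 0 <= A s y) /\ \sum_y A s y = 1.

(* Probability that A outputs an element of the complement of S, when given
   q i.i.d. uniform samples from S. *)
Definition succ_on (R : realFieldType) (n q : nat)
    (A : samples n q -> bvec n -> R) (S : {set bvec n}) : R :=
  \sum_(s : samples n q | [forall i, s i \in S])
     ((#|S|%:R ^+ q)^-1 * \sum_(y in ~: S) A s y).

Definition succ_avg (R : realFieldType) (n q : nat)
    (A : samples n q -> bvec n -> R) : R :=
  ((((2 ^ n - 1) * 2)%N)%:R)^-1 *
  \sum_(u : bvec n | u != zero_bvec n) \sum_(b : bool) succ_on A (BVset u b).

Definition bv_bound (R : realFieldType) (n q : nat) : R :=
  2^-1 + ((2 * ((2 ^ (n - q + 1) - 1)%N)%:R) : R)^-1.

(* Main.v *)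
Require Import Defs.
From HB Require Import structures.
From mathcomp Require Import all_boot all_order all_algebra.
From mathcomp Require Import zify ring lra.
Import Order.TTheory GRing.Theory Num.Theory.
Set Implicit Arguments. Unset Strict Implicit. Unset Printing Implicit Defensive.

Definition bvadd n (u v : bvec n) : bvec n := [ffun i => addb (u i) (v i)].

Lemma dotp_addl n (u v x : bvec n) : dotp (bvadd u v) x = addb (dotp u x) (dotp v x).
Proof.
rewrite /dotp -big_split /=; apply: eq_bigr => i _; rewrite ffunE.
by case: (u i); case: (v i); case: (x i).
Qed.

Lemma dotpC n (u x : bvec n) : dotp u x = dotp x u.
Proof. by apply: eq_bigr => i _; rewrite andbC. Qed.

Lemma dotp0 n (x : bvec n) : dotp (zero_bvec n) x = false.
Proof. by rewrite /dotp big1 // => i _; rewrite ffunE. Qed.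

Lemma bvaddK n (u v : bvec n) : bvadd (bvadd u v) v = u.
Proof. by apply/ffunP => i; rewrite !ffunE addbK. Qed.

Lemma card_bvec n : #|bvec n| = 2 ^ n.
Proof. by rewrite card_ffun card_bool card_ord. Qed.

Lemma BVsetC n (u : bvec n) b : ~: BVset u b = BVset u (~~ b).
Proof. by apply/setP => x; rewrite !inE; case: (dotp u x); case: b. Qed.

Lemma card_BVset_le n (u : bvec n) b : u != zero_bvec n ->
  #|BVset u b| <= #|BVset u (~~ b)|.
Proof.
move=> Hu.
have: [exists i, u i].
  apply: contraR Hu => /existsPn H; apply/eqP/ffunP => i.
  by rewrite ffunE; exact/negbTE/H.
case/existsP => i ui.
pose e : bvec n := [ffun j => j == i].
have de : dotp u e = true.
  rewrite dotpC /dotp (bigD1 i) //= big1 ?ffunE ?eqxx ?ui // => j /negbTE ji.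
  by rewrite ffunE ji.
have inj : injective (fun x => bvadd x e).
  by move=> x y /= exy; rewrite -(bvaddK x e) exy bvaddK.
rewrite -(card_imset _ inj); apply: subset_leq_card.
apply/subsetP => y /imsetP [x]; rewrite !inE => /eqP <- ->.
rewrite dotpC dotp_addl.
by rewrite (dotpC e) de (dotpC x); case: (dotp u x).
Qed.

Lemma card_BVset n (u : bvec n) b : u != zero_bvec n ->
  #|BVset u b| * 2 = 2 ^ n.
Proof.
move=> Hu.
have h1 := card_BVset_le b Hu; have h2 := card_BVset_le (~~ b) Hu.
rewrite negbK in h2.
have := cardsC (BVset u b); rewrite BVsetC card_bvec => <-.
have -> : #|BVset u (~~ b)| = #|BVset u b| by apply/eqP; rewrite eqn_leq h1 h2.
by rewrite muln2 addnn.
Qed.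

Definition Pset n q (s : samples n q) : {set bvec n * bool} :=
  [set p | [forall i, dotp p.1 (s i) == p.2]].
Definition Qset n q (s : samples n q) (y : bvec n) : {set bvec n * bool} :=
  [set p in Pset s | dotp p.1 y != p.2].

Lemma Q_half n q (s : samples n q) y : #|Qset s y| * 2 <= #|Pset s|.
Proof.
have sQP : Qset s y \subset Pset s by apply/subsetP => p; rewrite inE => /andP [].
have := cardsID (Qset s y) (Pset s).
rewrite (setIidPr sQP) => <-.
rewrite muln2 -addnn leq_add2l.
have [->|[w wQ]] := set_0Vmem (Qset s y); first by rewrite cards0.
pose g (p : bvec n * bool) := (bvadd p.1 w.1, addb p.2 w.2).
have inj : injective g.
  move=> [a b] [c d] /= [] e1 e2.
  by congr pair; [rewrite -(bvaddK a w.1) e1 bvaddK | exact: (addIb e2)].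
rewrite -(card_imset _ inj); apply: subset_leq_card.
apply/subsetP => z /imsetP [[a b] pQ ->].
move: wQ pQ; rewrite !inE /= => /andP [/forallP wP wy] /andP [/forallP pP py].
have hP : [forall i, dotp (bvadd a w.1) (s i) == addb b w.2].
  apply/forallP => i; rewrite dotp_addl.
  by move: (wP i) (pP i) => /eqP -> /eqP ->.
apply/andP; split; last exact: hP.
apply/negP => /andP [_]; rewrite dotp_addl.
by move: wy py; case: (dotp a y); case: (dotp w.1 y); case: (b); case: (w.2).
Qed.

Lemma sum_bool_card (T : finType) (P : pred T) : \sum_x (P x : nat) = #|P|.
Proof.
rewrite -sum1_card [RHS]big_mkcond; apply: eq_bigr => x _.
have -> : (x \in P) = P x by []. by case: (P x).
Qed.

Lemma sum_Pset n q : 0 < n -> 0 < q ->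
  \sum_(s : samples n q) #|Pset s| = ((2^n - 1) * 2) * (2^(n-1))^q + 2^(n*q).
Proof.
move=> n0 q0.
under eq_bigr => s _ do rewrite -sum_bool_card.
rewrite exchange_big /=.
rewrite (eq_bigr (fun p => #|BVset p.1 p.2| ^ q)); last first.
  move=> p _.
  rewrite (eq_bigr (fun s => nat_of_bool (s \in ffun_on (BVset p.1 p.2)))); last first.
    move=> s _; congr nat_of_bool; rewrite -[X in X = _]/(p \in Pset s) !inE.
    by apply/forallP/forallP => H i; move: (H i); rewrite inE.
  rewrite (sum_bool_card (fun s => s \in ffun_on (BVset p.1 p.2))) -[q in RHS]card_ord -card_ffun_on.
  by apply: eq_card.
transitivity (\sum_(u : bvec n) \sum_(b : bool) #|BVset u b| ^ q).
  by rewrite pair_bigA.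
rewrite (bigD1 (zero_bvec n)) //= addnC; congr (_ + _).
  have h : forall u : bvec n, u != zero_bvec n -> \sum_b #|BVset u b| ^ q = 2 * (2^(n-1))^q.
    move=> u Hu; rewrite big_bool /=.
    have e : forall b, #|BVset u b| = 2 ^ (n-1).
      move=> b; have := card_BVset b Hu.
      have : 2 ^ n = 2 ^ (n-1) * 2 by rewrite -expnSr; congr (2 ^ _); lia.
      lia.
    by rewrite !e addnn -muln2 mulnC.
  rewrite (eq_bigr _ h) sum_nat_const cardC1 card_bvec.
  by rewrite -subn1 mulnA (mulnC (2^n - 1)).
rewrite big_bool /=.
have -> : BVset (zero_bvec n) true = set0.
  by apply/setP => x; rewrite !inE dotp0.
have -> : BVset (zero_bvec n) false = setT.
  by apply/setP => x; rewrite !inE dotp0.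
by rewrite cards0 exp0n // add0n cardsT card_bvec expnM.
Qed.

Lemma card_BVset_pow n (u : bvec n) b : 0 < n -> u != zero_bvec n ->
  #|BVset u b| = 2 ^ (n - 1).
Proof.
move=> n0 Hu; have := card_BVset b Hu.
have : 2 ^ n = 2 ^ (n-1) * 2 by rewrite -expnSr; congr (2 ^ _); lia.
lia.
Qed.

Lemma N_le_Q n q (s : samples n q) (y : bvec n) :
  \sum_(u | u != zero_bvec n) \sum_(b : bool)
     ([forall i, s i \in BVset u b] && (y \notin BVset u b) : nat)
  <= #|Qset s y|.
Proof.
apply: (@leq_trans (\sum_(u : bvec n) \sum_(b : bool)
     ([forall i, s i \in BVset u b] && (y \notin BVset u b) : nat))).
  by rewrite [X in X <= _]big_mkcond; apply: leq_sum => u _; case: ifP.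
rewrite pair_bigA /= -(sum_bool_card (fun p => p \in Qset s y)).
apply/eq_leq/eq_bigr => p _; congr nat_of_bool.
rewrite /Qset /Pset !inE; congr (_ && _).
  by apply: eq_forallb => i; rewrite inE.
Qed.

Lemma nat_bound n q : 0 < n -> 0 < q -> q <= n ->
  2 ^ (n * q) * (2 ^ (n - q + 1) - 1) <= ((2^n - 1) * 2) * (2^(n-1))^q.
Proof.
move=> n0 q0 qn.
have e1 : 2 ^ (n * q) = (2^(n-1))^q * 2^q.
  by rewrite -expnM -expnD; congr (2 ^ _); nia.
have e2 : 2 ^ q * 2 ^ (n - q + 1) = 2 * 2 ^ n.
  by rewrite -expnD -expnS; congr (2 ^ _); lia.
have e3 : 2 <= 2 ^ q.
  by rewrite -{1}(expn1 2) leq_exp2l.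
have : 2 ^ q * (2 ^ (n - q + 1) - 1) <= (2 ^ n - 1) * 2.
  have h4 : 1 <= 2 ^ (n - q + 1) by rewrite expn_gt0.
  nia.
rewrite e1 -mulnA [X in _ <= X]mulnC => h.
by rewrite mulnC (mulnC (2 ^ n - 1)) leq_mul2r h orbT.
Qed.

Local Open Scope ring_scope.

Lemma succ_on_eq (R : realFieldType) n q (A : samples n q -> bvec n -> R) u b :
  (0 < n)%N -> u != zero_bvec n ->
  succ_on A (BVset u b) = ((2^(n-1))^q)%N%:R^-1 *
    \sum_s \sum_y A s y * ([forall i, s i \in BVset u b] && (y \notin BVset u b) : nat)%:R.
Proof.
move=> n0 Hu; rewrite /succ_on card_BVset_pow // -natrX -mulr_sumr; congr (_ * _).
rewrite big_mkcond; apply: eq_bigr => s _.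
case: ifP => /= _.
  rewrite big_mkcond; apply: eq_bigr => y _; rewrite inE.
  by case: (y \in BVset u b) => /=; rewrite ?mulr1 ?mulr0.
by rewrite big1 // => y _; rewrite mulr0.
Qed.

Lemma avg_sum_bound (R : realFieldType) n q (A : samples n q -> bvec n -> R) :
  (0 < n)%N -> (0 < q)%N -> is_rand_alg A ->
  \sum_(u | u != zero_bvec n) \sum_(b : bool) succ_on A (BVset u b) <=
  ((2^(n-1))^q)%N%:R^-1 * ((((2^n - 1) * 2) * (2^(n-1))^q + 2^(n*q))%N%:R / 2).
Proof.
move=> n0 q0 HA.
under eq_bigr => u hu do under eq_bigr => b _ do rewrite succ_on_eq //.
under eq_bigr => u hu do rewrite -mulr_sumr.
rewrite -mulr_sumr; apply: ler_wpM2l; first by rewrite invr_ge0 ler0n.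
under eq_bigr => u _ do rewrite exchange_big /=.
rewrite exchange_big /=.
under eq_bigr => s _ do (under eq_bigr => u _ do rewrite exchange_big /=; rewrite exchange_big /=).
rewrite -sum_Pset // natr_sum mulr_suml; apply: ler_sum => s _.
apply: (@le_trans _ _ (\sum_y A s y * (#|Pset s|%:R / 2))).
  apply: ler_sum => y _.
  under eq_bigr => u _ do rewrite -mulr_sumr.
  rewrite -mulr_sumr; apply: ler_wpM2l; first by case: (HA s) => H _; exact: H.
  under eq_bigr => u _ do rewrite -natr_sum.
  rewrite -natr_sum ler_pdivlMr // -natrM ler_nat.
  apply: leq_trans (Q_half s y); rewrite leq_mul2r /=.
  exact: N_le_Q.
by rewrite -mulr_suml; case: (HA s) => _ ->; rewrite mul1r.
Qed.

Unset Implicit Arguments.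

Theorem mainTheorem2 (R : realFieldType) (n q : nat)
    (A : samples n q -> bvec n -> R) :
  (1 <= n)%N -> (1 <= q)%N -> (q <= n)%N ->
  is_rand_alg A ->
  succ_avg A <= bv_bound R n q /\
  exists (u : bvec n) (b : bool),
    u != zero_bvec n /\ succ_on A (BVset u b) <= bv_bound R n q.
Proof.
move=> n0 q0 qn HA.
have Havg : succ_avg A <= bv_bound R n q.
  rewrite /succ_avg.
  have h := avg_sum_bound n0 q0 HA.
  apply: le_trans; first by apply: ler_wpM2l; [rewrite invr_ge0 ler0n | exact: h].
  have hb := nat_bound n0 q0 qn.
  set C := ((2 ^ n - 1) * 2)%N in hb *.
  set T := ((2 ^ (n - 1)) ^ q)%N in hb *.
  set E := (2 ^ (n * q))%N in hb *.
  set D := (2 ^ (n - q + 1) - 1)%N in hb *.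
  have C0 : (0 < C)%N.
    rewrite /C muln_gt0 andbT subn_gt0 -{1}(expn0 2) ltn_exp2l //.
  have T0 : (0 < T)%N by rewrite /T expn_gt0 expn_gt0.
  have D0 : (0 < D)%N.
    rewrite /D subn_gt0 -{1}(expn0 2) ltn_exp2l //; lia.
  rewrite /bv_bound -/D natrD natrM.
  have hb' : (E%:R * D%:R <= C%:R * T%:R :> R) by rewrite -!natrM ler_nat.
  have c0 : (0 < C%:R :> R) by rewrite ltr0n.
  have t0 : (0 < T%:R :> R) by rewrite ltr0n.
  have d0 : (0 < D%:R :> R) by rewrite ltr0n.
  rewrite -subr_ge0.
  have -> : 2^-1 + (2 * D%:R)^-1 - C%:R^-1 * (T%:R^-1 * ((C%:R * T%:R + E%:R) / 2)) =
     (C%:R * T%:R - E%:R * D%:R) / (2 * C%:R * T%:R * D%:R) :> R.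
    field; rewrite ?gt_eqF //.
  apply: divr_ge0; first by rewrite subr_ge0.
  by rewrite !mulr_ge0 // ltW.
split => //.
set B := bv_bound R n q in Havg *.
have [[u b] /andP [hu hle] | H] :=
  pickP (fun p : bvec n * bool => (p.1 != zero_bvec n) && (succ_on A (BVset p.1 p.2) <= B)).
  by exists u, b.
exfalso.
set S := \sum_(u | u != zero_bvec n) \sum_(b : bool) succ_on A (BVset u b).
have u0 : [ffun => true] != zero_bvec n.
  by apply/eqP => /ffunP /(_ (Ordinal n0)); rewrite !ffunE.
have lt : \sum_(u | u != zero_bvec n) \sum_(b : bool) B < S.
  apply: ltr_sum; first by apply/hasP; exists [ffun => true]; rewrite ?mem_index_enum.
  move=> u hu; apply: ltr_sum; first by apply/hasP; exists true; rewrite ?mem_index_enum.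
  move=> b _; have := H (u, b); rewrite /= hu /= => /negbT.
  by rewrite ltNge.
rewrite sumr_const big_bool in lt.
have hc : #|(fun i : bvec n => i != zero_bvec n)| = (2^n - 1)%N.
  by rewrite subn1 -card_bvec -(cardC1 (zero_bvec n)); apply: eq_card.
rewrite hc -[X in X *+ _ < _]/(B + B) -mulr2n -mulrnA -mulr_natr in lt.
have c0 : (0 < ((2 ^ n - 1) * 2)%N%:R :> R).
  rewrite ltr0n muln_gt0 andbT subn_gt0 -{1}(expn0 2) ltn_exp2l //.
move: Havg; rewrite /succ_avg -/S -(ler_pM2l c0) mulrA mulfV ?gt_eqF // mul1r.
rewrite mulrC => Hle.
have := lt_le_trans lt Hle.
by rewrite mulnC ltxx.
Qed.
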